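(* Let $C$ be a linear completely regular $[n,k,2]_q$ code with covering radius $\rho=1$ and $k<n-1$, let $n_a$ be the number of codewords at distance one from any vector not in $C$, and let $X_1,\dots,X_{n/n_a}$ be a partition of $\{1,\dots,n\}$ into sets of size $n_a$ such that every weight-2 codeword of $C$ has support contained in one of the $X_i$. For each $i$, let $D_i$ be the code obtained by taking the codewords of $C$ whose supports are contained in $X_i$ and deleting the coordinate positions outside $X_i$. Then $D_i$ is a linear completely regular code of length $n_a$, dimension $n_a-1$, minimum distance $2$ and covering radius $1$, and (for a suitable ordering of the coordinates in $X_i$) it has a generator matrix $G_i=[I\,|\,{\bf h}]$ where $I$ is the $(n_a-1)\times(n_a-1)$ identity matrix and ${\bf h}$ is a column vector of weight $n_a-1$.
   Context: Hamming distance; support of a vector = set of its nonzero coordinates; covering radius $\rho=\max_{\bf v}\min_{{\bf x}\in C}d({\bf v},{\bf x})$. $C$ is completely regular if for every vector ${\bf x}$, with $t=d({\bf x},C)$, the number of codewords at distance $i$ from ${\bf x}$ depends only on $t$ and $i$. *)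

(* Defs.v *)
From HB Require Import structures.
From mathcomp Require Import all_boot all_order all_algebra all_fingroup.
Set Implicit Arguments. Unset Strict Implicit. Unset Printing Implicit Defensive.
Import GRing.Theory.
Local Open Scope ring_scope.

Section Codes.
Variable F : finFieldType.

Definition supp m (x : 'rV[F]_m) : {set 'I_m} := [set i | x 0 i != 0].
Definition wt m (x : 'rV[F]_m) : nat := #|supp x|.
Definition hdist m (x y : 'rV[F]_m) : nat := wt (x - y).

Definition linear_code m (C : {set 'rV[F]_m}) : Prop :=
  0 \in C /\ forall (a : F) (x y : 'rV[F]_m), x \in C -> y \in C -> a *: x + y \in C.

Definition code_dim m (C : {set 'rV[F]_m}) : nat := \dim <<enum C>>%VS.

Definition min_distance m (C : {set 'rV[F]_m}) (d : nat) : Prop :=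
  (exists x y, [/\ x \in C, y \in C, x != y & hdist x y = d]) /\
  (forall x y, x \in C -> y \in C -> x != y -> (d <= hdist x y)%N).

Definition dist_to m (C : {set 'rV[F]_m}) (v : 'rV[F]_m) : nat :=
  \big[minn/m]_(c in C) hdist v c.

Definition covering_radius m (C : {set 'rV[F]_m}) : nat :=
  \max_(v : 'rV[F]_m) dist_to C v.

Definition nb_at m (C : {set 'rV[F]_m}) (v : 'rV[F]_m) (i : nat) : nat :=
  #|[set c in C | hdist v c == i]|.

Definition completely_regular m (C : {set 'rV[F]_m}) : Prop :=
  forall v w : 'rV[F]_m, dist_to C v = dist_to C w ->
    forall i, nb_at C v i = nb_at C w i.

Definition generator_matrix m k (C : {set 'rV[F]_m}) (G : 'M[F]_(k, m)) : Prop :=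
  \rank G = k /\ C = [set u *m G | u : 'rV[F]_k].

Definition restr n (X : {set 'I_n}) (c : 'rV[F]_n) : 'rV[F]_#|X| :=
  \row_(j < #|X|) c 0 (enum_val j).

Definition sub_code n (C : {set 'rV[F]_n}) (X : {set 'I_n}) : {set 'rV[F]_#|X|} :=
  [set restr X c | c in C & supp c \subset X].

(* the matrix [I | h] with coordinates reordered by the permutation s *)
Definition Ih_perm m (s : 'S_m) (h : 'cV[F]_m.-1) : 'M[F]_(m.-1, m) :=
  \matrix_(i < m.-1, j < m)
     (if (s j < m.-1)%N then ((i : nat) == s j)%:R else h i 0).

End Codes.

(* Main.v *)
Require Import Defs.
From mathcomp Require Import all_boot all_order all_algebra all_fingroup.
From mathcomp Require Import ring zify.
From Stdlib Require Import Lia.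
Set Warnings "-notation-overridden,-ambiguous-paths".
Import GRing.Theory.
Local Open Scope ring_scope.

Section Gen.
Variable F : finFieldType.

Lemma suppE m (x : 'rV[F]_m) j : (j \in supp x) = (x 0 j != 0).
Proof. by rewrite inE. Qed.

Lemma wt0 m (x : 'rV[F]_m) : wt x = 0%N -> x = 0.
Proof.
move=> /eqP; rewrite cards_eq0 => /eqP H; apply/rowP => j; rewrite mxE.
apply/eqP; apply/negPn/negP => Hj.
by have := in_set0 j; rewrite -H suppE Hj.
Qed.

Lemma wtZ m (x : 'rV[F]_m) a : a != 0 -> wt (a *: x) = wt x.
Proof.
move=> Ha; rewrite /wt; apply: eq_card => j.
by rewrite !suppE mxE mulf_eq0 negb_or Ha.
Qed.

Lemma lin_sub m (D : {set 'rV[F]_m}) x y : linear_code D -> x \in D -> y \in D -> x - y \in D.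
Proof. by move=> [_ H] Hx Hy; rewrite addrC -scaleN1r; apply: H. Qed.

Lemma lin_scale m (D : {set 'rV[F]_m}) a x : linear_code D -> x \in D -> a *: x \in D.
Proof. by move=> [H0 H] Hx; rewrite -[_ *: _]addr0; apply: H. Qed.

Lemma lin_add m (D : {set 'rV[F]_m}) x y : linear_code D -> x \in D -> y \in D -> x + y \in D.
Proof. by move=> [_ H] Hx Hy; rewrite -[x]scale1r; apply: H. Qed.

Lemma small_supp m (A : {set 'I_m}) (j0 : 'I_m) : (#|A| <= 1)%N -> exists j, A \subset [set j].
Proof.
case E: #|A| => [|[|//]] _.
  by exists j0; move/eqP: E; rewrite cards_eq0 => /eqP ->; apply: sub0set.
by move/eqP/cards1P: E => [j ->]; exists j.
Qed.

Lemma dist_le m (D : {set 'rV[F]_m}) v c : c \in D -> (dist_to D v <= hdist v c)%N.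
Proof.
move=> Hc; rewrite /dist_to; move: (mem_index_enum c); elim: (index_enum _) => //= a r IH.
rewrite inE big_cons; case/orP => [/eqP<-|Hr]; first by rewrite Hc geq_minl.
by case: (a \in D); [apply: leq_trans (geq_minr _ _) (IH Hr) | apply: IH].
Qed.

Lemma dist_ge1 m (D : {set 'rV[F]_m}) v : (0 < m)%N -> v \notin D -> (1 <= dist_to D v)%N.
Proof.
move=> Hm Hv; rewrite /dist_to; apply: (big_ind (fun x => 1 <= x)%N) => //.
  by move=> a b Ha Hb; rewrite leq_min Ha Hb.
move=> c Hc; rewrite lt0n; apply/negP => /eqP /wt0 /eqP; rewrite subr_eq0 => /eqP E.
by move: Hv; rewrite E Hc.
Qed.

End Gen.

Section Abs.
Variable F : finFieldType.
Variable p : nat.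
Variable D : {set 'rV[F]_p.+2}.
Hypothesis HL : linear_code D.
Hypothesis HZ : forall y j, y \in D -> supp y \subset [set j] -> y = 0.
Hypothesis HP : forall j j', j != j' -> exists y, [/\ y \in D, y 0 j = 1, y 0 j' != 0 &
   forall k, k != j -> k != j' -> y 0 k = 0].

Definition wid (i : 'I_p.+1) : 'I_p.+2 := widen_ord (leqnSn _) i.

Lemma wid_neq i : wid i != ord_max.
Proof. by rewrite -(inj_eq val_inj) /= neq_ltn ltn_ord. Qed.

Lemma wid_inj : injective wid.
Proof. by move=> i i' /(congr1 val) /= E; apply: val_inj. Qed.

Lemma split_ord (j : 'I_p.+2) : j = ord_max \/ exists i, j = wid i.
Proof.
case: (ltnP j p.+1) => H; first by right; exists (Ordinal H); apply: val_inj.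
by left; apply: val_inj => /=; have := ltn_ord j; lia.
Qed.

Lemma exy : exists y : 'I_p.+1 -> 'rV[F]_p.+2, forall i,
  [/\ y i \in D, y i 0 (wid i) = 1, y i 0 ord_max != 0 &
   forall k, k != wid i -> k != ord_max -> y i 0 k = 0].
Proof.
have H : forall i : 'I_p.+1, exists y : 'rV[F]_p.+2, [/\ y \in D, y 0 (wid i) = 1, y 0 ord_max != 0 &
   forall k, k != wid i -> k != ord_max -> y 0 k = 0].
  by move=> i; apply: HP; apply: wid_neq.
exact: (fin_all_exists H).
Qed.


Section Inner.
Variable y : 'I_p.+1 -> 'rV[F]_p.+2.
Hypothesis Hy : forall i,
  [/\ y i \in D, y i 0 (wid i) = 1, y i 0 ord_max != 0 &
   forall k, k != wid i -> k != ord_max -> y i 0 k = 0].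

Definition hh : 'cV[F]_p.+1 := \col_i y i 0 ord_max.
Definition GG : 'M[F]_(p.+1, p.+2) := Ih_perm (1 : 'S_p.+2) hh.

Lemma GGy i j : GG i j = y i 0 j.
Proof.
rewrite /GG /Ih_perm mxE perm1 /=.
case: (split_ord j) => [->|[k ->]]; first by rewrite ltnn mxE.
rewrite /= ltn_ord; have [-> | ne] := eqVneq i k.
  by rewrite eqxx; case: (Hy k).
have -> : (i == k :> nat) = false by apply/negbTE.
case: (Hy i) => _ _ _ ->; rewrite ?wid_neq //.
by rewrite (inj_eq wid_inj) eq_sym.
Qed.

Lemma mG_wid (u : 'rV[F]_p.+1) k : (u *m GG) 0 (wid k) = u 0 k.
Proof.
rewrite mxE (bigD1 k) //= big1 ?addr0.
  by rewrite GGy; case: (Hy k) => _ -> _ _; rewrite mulr1.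
move=> i ne; rewrite GGy; case: (Hy i) => _ _ _ ->; rewrite ?mulr0 ?wid_neq //.
by rewrite (inj_eq wid_inj) eq_sym.
Qed.

Lemma mG_last (u : 'rV[F]_p.+1) : (u *m GG) 0 ord_max = \sum_i u 0 i * hh i 0.
Proof. by rewrite mxE; apply: eq_bigr => i _; rewrite GGy mxE. Qed.

Lemma mG_in (u : 'rV[F]_p.+1) : u *m GG \in D.
Proof.
rewrite mulmx_sum_row; apply: (big_ind (fun x => x \in D)).
- by case: HL.
- by move=> a b; apply: lin_add.
move=> i _; apply: lin_scale => //.
have -> : row i GG = y i by apply/rowP => j; rewrite mxE GGy.
by case: (Hy i).
Qed.

Lemma DG : D = [set u *m GG | u : 'rV_p.+1].
Proof.
apply/setP => x; apply/idP/imsetP; last by move=> [u _ ->]; apply: mG_in.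
move=> Hx; exists (\row_i x 0 (wid i)) => //.
set z := _ *m _.
have : x - z = 0.
  apply: (HZ _ ord_max); first by apply: lin_sub => //; apply: mG_in.
  apply/subsetP => j; rewrite suppE in_set1; case: (split_ord j) => [->|[k ->]]//.
  have -> : (x - z) 0 (wid k) = x 0 (wid k) - z 0 (wid k) by rewrite !mxE.
  by rewrite /z mG_wid mxE subrr eqxx.
by move/eqP; rewrite subr_eq0 => /eqP.
Qed.

Definition BB : 'M[F]_(p.+2, p.+1) := \matrix_(j, i) ((j == wid i)%:R).

Lemma GB : GG *m BB = 1%:M.
Proof.
apply/matrixP => i i'; rewrite [LHS]mxE (bigD1 (wid i')) //= big1 ?addr0.
  rewrite GGy [BB _ _]mxE eqxx mulr1 [RHS]mxE.
  have [-> | ne] := eqVneq i i'; first by case: (Hy i').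
  case: (Hy i) => _ _ _ ->; rewrite ?wid_neq //.
  by rewrite (inj_eq wid_inj) eq_sym.
by move=> j ne; rewrite [BB _ _]mxE (negbTE ne) mulr0.
Qed.


Lemma G_inj : injective (fun u : 'rV[F]_p.+1 => u *m GG).
Proof.
move=> u u' /= E.
by rewrite -[u]mulmx1 -[u']mulmx1 -GB !mulmxA E.
Qed.

Lemma G_rank : \rank GG = p.+1.
Proof. apply/eqP; change (row_free GG); apply/row_freeP; exists BB; exact: GB. Qed.

Lemma D_dim : code_dim D = p.+1.
Proof.
rewrite /code_dim.
pose f : 'Hom('rV[F]_p.+1, 'rV[F]_p.+2) := linfun (mulmxr GG).
have E : <<enum D>>%VS = limg f.
  apply/eqP; rewrite eqEsubv; apply/andP; split.
    apply/span_subvP => x; rewrite mem_enum DG => /imsetP [u _ ->].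
    by apply/memv_imgP; exists u; [exact: memvf | rewrite lfunE].
  apply/subvP => x /memv_imgP [u _ ->]; rewrite lfunE /=; apply: memv_span.
  by rewrite mem_enum DG; apply/imsetP; exists u.
rewrite E; have := limg_ker_dim f fullv.
have /eqP -> : lker f == 0%VS.
  by apply/lker0P => u u'; rewrite !lfunE /=; apply: G_inj.
by rewrite capv0 dimv0 add0n dimvf dim_matrix mul1r.
Qed.


Definition phi (x : 'rV[F]_p.+2) : F := x 0 ord_max - \sum_i hh i 0 * x 0 (wid i).

Lemma phiD x : (x \in D) = (phi x == 0).
Proof.
rewrite DG; apply/imsetP/eqP.
  move=> [u _ ->]; rewrite /phi mG_last.
  apply/eqP; rewrite subr_eq0; apply/eqP; apply: eq_bigr => i _; rewrite mulrC.
  by congr (_ * _); symmetry; apply: mG_wid.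
move=> H; exists (\row_i x 0 (wid i)) => //; apply/rowP => j.
case: (split_ord j) => [->|[k ->]]; last by rewrite mG_wid mxE.
rewrite mG_last; move/eqP: H; rewrite subr_eq0 => /eqP ->.
apply: eq_bigr => i _; rewrite [in RHS]mxE; by rewrite mulrC.
Qed.

Lemma phiZD (a : F) (x z : 'rV[F]_p.+2) : phi (a *: x + z) = a * phi x + phi z.
Proof.
have E j : (a *: x + z) 0 j = a * x 0 j + z 0 j by rewrite !mxE.
rewrite /phi E; under eq_bigr => i _ do rewrite E.
have -> : \sum_i hh i 0 * (a * x 0 (wid i) + z 0 (wid i)) =
   a * \sum_i hh i 0 * x 0 (wid i) + \sum_i hh i 0 * z 0 (wid i).
  by rewrite mulr_sumr -big_split; apply: eq_bigr => i _ /=; ring.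
ring.
Qed.

Lemma phi0 : phi 0 = 0.
Proof. rewrite /phi mxE big1 ?subr0 // => i _; by rewrite (_ : (0 : 'rV[F]_p.+2) 0 (wid i) = 0) ?mulr0 // mxE. Qed.

Lemma phiB (x z : 'rV[F]_p.+2) : phi (x - z) = phi x - phi z.
Proof. by rewrite addrC -scaleN1r phiZD mulN1r addrC. Qed.

Lemma phiZ (a : F) (x : 'rV[F]_p.+2) : phi (a *: x) = a * phi x.
Proof. by rewrite -[a *: x]addr0 phiZD phi0 addr0. Qed.

Definition el : 'rV[F]_p.+2 := \row_j ((j == ord_max)%:R).

Lemma phi_e : phi el = 1.
Proof.
rewrite /phi mxE eqxx big1 ?subr0 // => i _.
by rewrite [el _ _]mxE (negbTE (wid_neq i)) mulr0.
Qed.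

Lemma wt_zero m : wt (0 : 'rV[F]_m) = 0%N.
Proof. rewrite /wt; apply/eqP; rewrite cards_eq0; apply/eqP/setP => j; rewrite suppE inE; by rewrite (_ : (0 : 'rV[F]_m) 0 j = 0) ?eqxx // mxE. Qed.

Lemma dist0 v : (dist_to D v == 0%N) = (v \in D).
Proof.
apply/idP/idP => H.
  by apply/negPn/negP => Hv; have := @dist_ge1 F _ D v isT Hv; rewrite (eqP H).
by have := @dist_le F _ D v _ H; rewrite /hdist subrr wt_zero leqn0.
Qed.

Lemma cov : covering_radius D = 1%N.
Proof.
apply/eqP; rewrite eqn_leq; apply/andP; split.
  apply/bigmax_leqP => v _; set c := v - phi v *: el.
  have Hc : c \in D by rewrite phiD phiB phiZ phi_e mulr1 subrr.
  apply: leq_trans (@dist_le F _ D v _ Hc) _; rewrite /hdist /c opprB addrC subrK /wt.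
  apply: leq_trans (subset_leq_card (_ : _ \subset [set ord_max])) _; last by rewrite cards1.
  apply/subsetP => j; rewrite suppE !mxE in_set1; case: (j == ord_max) => //.
  by rewrite mulr0 eqxx.
apply: leq_trans (leq_bigmax el); apply: dist_ge1 => //.
by rewrite phiD phi_e oner_eq0.
Qed.

Lemma wt2 z : z \in D -> z != 0 -> (2 <= wt z)%N.
Proof.
move=> Hz nz; rewrite leqNgt; apply/negP => H.
have [j Hj] := @small_supp _ (supp z) ord_max H.
by move: nz; rewrite (HZ _ _ Hz Hj) eqxx.
Qed.

Lemma mind : min_distance D 2.
Proof.
split; last first.
  move=> a b Ha Hb Hab; rewrite /hdist; apply: wt2; first exact: lin_sub.
  by rewrite subr_eq0.
have [Hy0 H1 H2 H3] := Hy ord0.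
exists (y ord0), 0; split => //; first by case: HL.
  by apply/eqP => E; move: H1; rewrite E mxE => /eqP; rewrite eq_sym oner_eq0.
rewrite /hdist subr0 /wt.
have -> : supp (y ord0) = [set wid ord0; ord_max].
  apply/setP => j; rewrite suppE !inE; case: (split_ord j) => [->|[k ->]].
    by rewrite eqxx orbT.
  rewrite (inj_eq wid_inj) (negbTE (wid_neq k)) orbF.
  have [-> | ne] := eqVneq k ord0; first by rewrite H1 oner_eq0.
  by rewrite H3 ?eqxx // ?(inj_eq wid_inj) ?wid_neq.
by rewrite cards2 wid_neq.
Qed.

Lemma nb_le v w l i : l != 0 -> phi w = l * phi v -> (nb_at D v i <= nb_at D w i)%N.
Proof.
move=> Hl Hw; rewrite /nb_at.
pose g := fun c : 'rV[F]_p.+2 => w - l *: (v - c).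
rewrite -(@card_in_imset _ _ g); last first.
  move=> c c' _ _ /= E.
  have : l *: (v - c) = l *: (v - c') by apply: oppr_inj; apply: (addrI w).
  move/(congr1 (fun z => l^-1 *: z)); rewrite !scalerA mulVf // !scale1r.
  by move/addrI/oppr_inj.
apply: subset_leq_card; apply/subsetP => _ /imsetP [c Hc ->].
move: Hc; rewrite !inE => /andP [HcD Hci]; apply/andP; split.
  move: HcD; rewrite !phiD /g phiB phiZ phiB => /eqP ->.
  by rewrite subr0 Hw subrr.
by rewrite /hdist /g opprB addrC subrK wtZ.
Qed.

Lemma CR : completely_regular D.
Proof.
move=> v w Hd i.
have E : (phi v == 0) = (phi w == 0) by rewrite -!phiD -!dist0 Hd.
suff H : forall a b, (phi a == 0) = (phi b == 0) -> (nb_at D a i <= nb_at D b i)%N.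
  by apply/eqP; rewrite eqn_leq !H.
move=> a b Eab; have [Ha|Ha] := eqVneq (phi a) 0.
  apply: (@nb_le _ _ 1); first exact: oner_neq0.
  by move: Eab; rewrite Ha eqxx => /esym/eqP ->; rewrite mul1r.
have Hb : phi b != 0 by rewrite -Eab.
apply: (@nb_le _ _ (phi b / phi a)); first by rewrite mulf_neq0 ?invr_eq0.
by rewrite divfK.
Qed.

Lemma gen : exists (s : 'S_p.+2) (h : 'cV[F]_(p.+1)),
   #|[set i | h i 0 != 0]| = p.+1 /\ generator_matrix D (Ih_perm s h).
Proof.
exists (1%g : 'S_p.+2), hh; split; last by split; [exact: G_rank | exact: DG].
have -> : [set i | hh i 0 != 0] = setT.
  by apply/setP => i; rewrite !inE mxE; case: (Hy i).
by rewrite cardsT card_ord.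
Qed.

End Inner.

Lemma abs_p2 : [/\ code_dim D = p.+1, min_distance D 2, covering_radius D = 1%N,
  completely_regular D & exists (s : 'S_p.+2) (h : 'cV[F]_(p.+1)),
   #|[set i | h i 0 != 0]| = p.+1 /\ generator_matrix D (Ih_perm s h)].
Proof.
have [y Hy] := exy.
split; [exact: (D_dim _ Hy) | exact: (mind _ Hy) | exact: (cov _ Hy) | exact: (CR _ Hy) | exact: (gen _ Hy)].
Qed.

End Abs.

Lemma abs_main (F : finFieldType) (m : nat) (D : {set 'rV[F]_m}) : (1 < m)%N -> linear_code D ->
  (forall y j, y \in D -> supp y \subset [set j] -> y = 0) ->
  (forall j j', j != j' -> exists y, [/\ y \in D, y 0 j = 1, y 0 j' != 0 &
   forall k, k != j -> k != j' -> y 0 k = 0]) ->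
  [/\ code_dim D = m.-1, min_distance D 2, covering_radius D = 1%N,
  completely_regular D & exists (s : 'S_m) (h : 'cV[F]_(m.-1)),
   #|[set i | h i 0 != 0]| = m.-1 /\ generator_matrix D (Ih_perm s h)].
Proof.
case: m D => [|[|p]] D // _ HL HZ HP.
exact: (@abs_p2 F p D HL HZ HP).
Qed.

Section Main.
Variable F : finFieldType.
Variables (n n_a : nat) (C : {set 'rV[F]_n}) (P : {set {set 'I_n}}).
Hypothesis HL : linear_code C.
Hypothesis Hmd : min_distance C 2.
Hypothesis Hnb : forall v, v \notin C -> nb_at C v 1 = n_a.
Hypothesis Hpart : partition P [set: 'I_n].
Hypothesis Hsize : forall X, X \in P -> #|X| = n_a.
Hypothesis H2 : forall c, c \in C -> wt c = 2%N -> exists2 X, X \in P & supp c \subset X.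

Lemma noW1 c : c \in C -> (wt c < 2)%N -> c = 0.
Proof.
move=> Hc H; apply/eqP; apply/negPn/negP => nz.
case: Hmd => _ Hm; have := Hm c 0 Hc (proj1 HL) nz.
by rewrite /hdist subr0 leqNgt H.
Qed.

Lemma noW1s c j : c \in C -> supp c \subset [set j] -> c = 0.
Proof.
move=> Hc Hs; apply: noW1 => //; rewrite /wt.
by apply: leq_ltn_trans (subset_leq_card Hs) _; rewrite cards1.
Qed.

Definition ev (i : 'I_n) : 'rV[F]_n := \row_j ((j == i)%:R).

Lemma supp_ev i : supp (ev i) = [set i].
Proof.
apply/setP => k; rewrite suppE mxE in_set1.
by case: (k == i); rewrite ?oner_eq0 ?eqxx.
Qed.

Lemma ev_notin i : ev i \notin C.
Proof.
apply/negP => H; have := @noW1 _ H; rewrite /wt supp_ev cards1 => /(_ isT) /rowP /(_ i).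
by rewrite !mxE eqxx => /eqP; rewrite oner_eq0.
Qed.

Lemma cprops (c : 'rV[F]_n) i j : i != j -> supp (ev i - c) = [set j] ->
  [/\ c 0 i = 1, c 0 j != 0 & forall k, k != i -> k != j -> c 0 k = 0].
Proof.
move=> ne Hs.
have E k : ((k == i)%:R - c 0 k != 0) = (k == j).
  by rewrite -[k == j]in_set1 -Hs suppE !mxE.
split.
- move: (E i); rewrite eqxx (negbTE ne) => /negbFE; rewrite subr_eq0 => /eqP <-.
  by [].
- by move: (E j); rewrite [j == i]eq_sym (negbTE ne) eqxx sub0r oppr_eq0 => ->.
- move=> k ki kj; move: (E k); rewrite (negbTE ki) (negbTE kj) sub0r oppr_eq0.
  by move/negbFE/eqP.
Qed.

Lemma pairs X : X \in P -> forall i j, i \in X -> j \in X -> i != j ->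
  exists c, c \in C /\ supp (ev i - c) = [set j].
Proof.
move=> HX i j Hi Hj ne.
set S := [set c in C | hdist (ev i) c == 1%N].
have HS : #|S| = n_a by apply: Hnb; apply: ev_notin.
set T := [set k | [exists c, (c \in C) && (supp (ev i - c) == [set k])]].
pose g := fun c => odflt i [pick k in supp (ev i - c)].
have Hg : forall c, c \in S -> supp (ev i - c) = [set g c].
  move=> c; rewrite inE /hdist /wt => /andP [_ /cards1P [k Hk]].
  rewrite /g; case: pickP => [k' | H]; rewrite Hk.
    by rewrite in_set1 => /eqP ->.
  by have := H k; rewrite Hk in_set1 eqxx.
have Hinj : {in S &, injective g}.
  move=> c c' Hc Hc' E.
  have Hs := Hg c Hc; have Hs' := Hg c' Hc'; rewrite -E in Hs'.
  have Cc : c \in C by move: Hc; rewrite inE => /andP [].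
  have Cc' : c' \in C by move: Hc'; rewrite inE => /andP [].
  have : c' - c = 0.
    apply: (@noW1s _ (g c)); first exact: lin_sub.
    have E2 : c' - c = (ev i - c) - (ev i - c') by rewrite opprB [RHS]addrC addrA subrK.
    apply/subsetP => k; rewrite suppE in_set1 E2 => H; apply/negPn/negP => nk.
    have h1 : (ev i - c) 0 k = 0.
      have : k \notin supp (ev i - c) by rewrite Hs in_set1.
      by rewrite suppE negbK => /eqP.
    have h2 : (ev i - c') 0 k = 0.
      have : k \notin supp (ev i - c') by rewrite Hs' in_set1.
      by rewrite suppE negbK => /eqP.
    move: H.
    have -> : ((ev i - c) - (ev i - c')) 0 k = (ev i - c) 0 k - (ev i - c') 0 k by rewrite !mxE.
    by rewrite h1 h2 subrr eqxx.
  by move/eqP; rewrite subr_eq0 => /eqP.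
have Htriv : trivIset P by case/and3P: Hpart.
have HT : T \subset X.
  apply/subsetP => k; rewrite inE => /existsP [c /andP [Hc /eqP Hs]].
  have [<- // | nik] := eqVneq i k.
  have [c1 c2 c3] := cprops _ _ _ nik Hs.
  have Hsc : supp c = [set i; k].
    apply/setP => l; rewrite suppE !inE.
    have [->|nl] := eqVneq l i; first by rewrite c1 oner_eq0.
    have [->|nlk] := eqVneq l k; first by rewrite c2.
    by rewrite c3 ?eqxx.
  have Hw : wt c = 2%N by rewrite /wt Hsc cards2 nik.
  have [Y HY HcY] := H2 _ Hc Hw.
  have iY : i \in Y by apply: (subsetP HcY); rewrite Hsc !inE eqxx.
  have kY : k \in Y by apply: (subsetP HcY); rewrite Hsc !inE eqxx orbT.
  by rewrite -(def_pblock Htriv HX Hi) (def_pblock Htriv HY iY).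
have HTX : T = X.
  apply/eqP; rewrite eqEcard HT /= Hsize // -HS -(card_in_imset Hinj).
  apply: subset_leq_card; apply/subsetP => _ /imsetP [c Hc ->].
  rewrite inE; apply/existsP; exists c; rewrite (Hg c Hc) eqxx andbT.
  by move: Hc; rewrite inE => /andP [].
by move: Hj; rewrite -HTX inE => /existsP [c /andP [Hc /eqP Hs]]; exists c.
Qed.


Variable X : {set 'I_n}.
Hypothesis HX : X \in P.

Lemma sub_codeP y : reflect (exists c, [/\ c \in C, supp c \subset X & y = restr X c])
  (y \in sub_code C X).
Proof.
apply: (iffP imsetP) => [[c Hc ->]|[c [Hc Hs ->]]].
  by move: Hc; rewrite inE => /andP [Hc Hs]; exists c.
by exists c => //; rewrite inE Hc Hs.
Qed.

Lemma out0 (c : 'rV[F]_n) k : supp c \subset X -> k \notin X -> c 0 k = 0.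
Proof.
move=> Hs nk; have : k \notin supp c by apply: contra nk; apply: (subsetP Hs).
by rewrite suppE negbK => /eqP.
Qed.

Lemma sub_lin : linear_code (sub_code C X).
Proof.
case: HL => H0 Hl; split.
  apply/sub_codeP; exists 0; split => //.
    by apply/subsetP => k; rewrite suppE mxE eqxx.
  by apply/rowP => k; rewrite !mxE.
move=> a _ _ /sub_codeP [c [Hc Hs ->]] /sub_codeP [c' [Hc' Hs' ->]].
apply/sub_codeP; exists (a *: c + c'); split; first exact: Hl.
  apply/subsetP => k; rewrite suppE => H; apply/negPn/negP => nk.
  by move: H; rewrite !mxE (out0 _ _ Hs nk) (out0 _ _ Hs' nk) mulr0 addr0 eqxx.
by apply/rowP => k; rewrite !mxE.
Qed.

Lemma sub_Z y j : y \in sub_code C X -> supp y \subset [set j] -> y = 0.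
Proof.
case/sub_codeP => c [Hc Hs ->] Hy.
have -> : c = 0.
  apply: (@noW1s _ (enum_val j)) => //; apply/subsetP => k Hk.
  have kX := subsetP Hs k Hk.
  have Ek : enum_val (enum_rank_in kX k) = k := enum_rankK_in kX kX.
  have : enum_rank_in kX k \in supp (restr X c) by rewrite suppE mxE Ek -suppE.
  by move/(subsetP Hy); rewrite !in_set1 => /eqP <-; rewrite Ek.
by apply/rowP => k; rewrite !mxE.
Qed.

Lemma sub_P (j j' : 'I_#|X|) : j != j' -> exists y, [/\ y \in sub_code C X, y 0 j = 1, y 0 j' != 0 &
   forall k, k != j -> k != j' -> y 0 k = 0].
Proof.
move=> ne.
have ne' : enum_val j != enum_val j' by apply: contra ne => /eqP /enum_val_inj ->.
have [c [Hc Hs]] := @pairs X HX _ _ (enum_valP j) (enum_valP j') ne'.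
have [c1 c2 c3] := cprops _ _ _ ne' Hs.
exists (restr X c); split.
- apply/sub_codeP; exists c; split => //.
  apply/subsetP => k; rewrite suppE.
  have [-> _|nk] := eqVneq k (enum_val j); first exact: enum_valP.
  have [-> _|nk'] := eqVneq k (enum_val j'); first exact: enum_valP.
  by rewrite c3 // eqxx.
- by rewrite mxE.
- by rewrite mxE.
- move=> k kj kj'; rewrite mxE; apply: c3.
    by apply: contra kj => /eqP /enum_val_inj ->.
  by apply: contra kj' => /eqP /enum_val_inj ->.
Qed.

Lemma sub_size : (1 < #|X|)%N.
Proof.
case: Hmd => [[x [y [Hx Hy nxy Hd]]] _].
have Hz : x - y \in C by apply: lin_sub.
have [Y HY Hs] := H2 _ Hz Hd.
rewrite (Hsize _ HX) -(Hsize _ HY) -[2%N]Hd.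
exact: subset_leq_card.
Qed.

End Main.

Theorem corollary3p7 (F : finFieldType) (n k n_a : nat) (C : {set 'rV[F]_n})
  (P : {set {set 'I_n}}) :
  linear_code C -> code_dim C = k -> min_distance C 2 ->
  covering_radius C = 1%N -> completely_regular C -> (k < n.-1)%N ->
  (forall v, v \notin C -> nb_at C v 1 = n_a) ->
  partition P [set: 'I_n] -> (forall X, X \in P -> #|X| = n_a) ->
  (forall c, c \in C -> wt c = 2%N -> exists2 X, X \in P & supp c \subset X) ->
  forall X, X \in P ->
    [/\ #|X| = n_a, linear_code (sub_code C X), code_dim (sub_code C X) = n_a.-1,
        min_distance (sub_code C X) 2 &
        covering_radius (sub_code C X) = 1%N] /\
    completely_regular (sub_code C X) /\
        (exists (s : 'S_(#|X|)) (h : 'cV[F]_(#|X|.-1)),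
          #|[set i | h i 0 != 0]| = n_a.-1 /\
          generator_matrix (sub_code C X) (Ih_perm s h)).
Proof.
move=> HL _ Hmd _ _ _ Hnb Hpart Hsize H2 X HX.
have HXs := Hsize X HX.
have [d1 d2 d3 d4 [s [h [hh hg]]]] :=
  @abs_main F _ (sub_code C X) (@sub_size F n n_a C P HL Hmd Hsize H2 X HX)
    (@sub_lin F n C HL X) (@sub_Z F n C HL Hmd X)
    (@sub_P F n n_a C P HL Hmd Hnb Hpart Hsize H2 X HX).
split; first split; [exact: HXs | exact: (@sub_lin F n C HL X) | by rewrite -HXs | exact: d2 | exact: d3|].
split => //; exists s, h; split => //; by rewrite -HXs.
Qed.
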